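(* Let $A\in\mathbb{R}^{n\times n}$, $B\in\mathbb{R}^{n\times m}$, horizon $N\ge1$, $\theta\in(0,1)$. For $t\in\{1,\dots,N\}$ let $\mathcal{X}_t=\{x\in\mathbb{R}^n\mid (x-p_t)^\top P_t(x-p_t)\le1\}$ and let $\mathcal{U}=\{u\in\mathbb{R}^m\mid u^\top Qu\le1\}$, with $p_t\in\mathbb{R}^n$ and $P_t$, $Q$ symmetric positive definite. Let $Y\in\mathbb{R}^{n\times n}$ be symmetric positive definite and $\mathcal{W}=\{w\mid w^\top Yw\le1\}$, and let $w^{(0)}(0),\dots,w^{(0)}(N-1)$ be a random disturbance sequence such that $\Pr\{w^{(0)}(t)\in\mathcal{W}\ \forall t\in\{0,\dots,N-1\}\}\ge1-\theta$. Let $(\hat\Phi^*,\Psi^*,\lambda_0^*,\lambda_1^* )$ be a feasible solution of the program: minimize $\operatorname{trace}\hat\Phi$ over symmetric $\hat\Phi\succ0$, $\Psi\in\mathbb{R}^{m\times n}$, $\lambda_0,\lambda_1\in\mathbb{R}$ subject to $\lambda_0\ge0$, $\lambda_1\ge0$, $1-\lambda_0-\lambda_1\ge0$; $\begin{bmatrix}\hat\Phi-\frac{1}{\lambda_1}Y^{-1} & A\hat\Phi+B\Psi\\ (A\hat\Phi+B\Psi)^\top & \lambda_0\hat\Phi\end{bmatrix}\succeq0$; $\begin{bmatrix}\hat\Phi & \Psi^\top Q^{1/2}\\ Q^{1/2}\Psi & I\end{bmatrix}\succ0$; $\hat\Phi\prec P_t^{-1}$ for all $t\in\{1,\dots,N\}$.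 Define $\Phi=(\hat\Phi^* )^{-1}$, $K=\Psi^*\Phi$, $\mathcal{E}=\{e\mid e^\top\Phi e\le1\}$, $\mathcal{E}_u=\{Ke\mid e\in\mathcal{E}\}$, and let $e^{(0)}$ be the trajectory of the error system $e^{(0)}(t+1)=(A+BK)e^{(0)}(t)+w^{(0)}(t)$, $e^{(0)}(0)=0$. Then: (i) $\Pr\{e^{(0)}(t)\in\mathcal{E}\ \forall t\in\{1,\dots,N\}\}\ge1-\theta$; (ii) $\mathrm{int}(\mathcal{X}_t\ominus\mathcal{E})\ne\emptyset$ for all $t\in\{1,\dots,N\}$; (iii) $\mathrm{int}(\mathcal{U}\ominus\mathcal{E}_u)\ne\emptyset$.
   Context: $Q^{1/2}$ denotes the symmetric positive definite square root of $Q$; $\succ,\succeq$ denote the Loewner order. The Pontryagin difference is $S_1\ominus S_2=\{s_1\mid s_1+s_2\in S_1\ \forall s_2\in S_2\}$ and $\mathrm{int}$ denotes the interior of a set. *)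

(* Defs.v *)
From HB Require Import structures.
From mathcomp Require Import all_boot all_order all_algebra.
From mathcomp Require Import all_classical all_reals all_analysis.
Set Implicit Arguments. Unset Strict Implicit. Unset Printing Implicit Defensive.
Import Order.TTheory GRing.Theory Num.Theory.
Import numFieldNormedType.Exports.
Local Open Scope classical_set_scope.
Local Open Scope ring_scope.

Definition qf (R : realType) (n : nat) (M : 'M[R]_n) (x : 'cV[R]_n) : R :=
  (x^T *m M *m x) 0 0.

Definition psd (R : realType) (n : nat) (M : 'M[R]_n) : Prop :=
  M^T = M /\ forall x : 'cV[R]_n, 0 <= qf M x.

Definition pd (R : realType) (n : nat) (M : 'M[R]_n) : Prop :=
  M^T = M /\ forall x : 'cV[R]_n, x != 0 -> 0 < qf M x.

Definition ellipsoid (R : realType) (n : nat) (M : 'M[R]_n) (c : 'cV[R]_n)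
  : set 'cV[R]_n := [set x | qf M (x - c) <= 1].

Definition pdiff (R : realType) (n : nat) (S1 S2 : set 'cV[R]_n) : set 'cV[R]_n :=
  [set s1 | forall s2, S2 s2 -> S1 (s1 + s2)].

Fixpoint err_traj (R : realType) (n : nat) (F : 'M[R]_n) (w : nat -> 'cV[R]_n)
  (t : nat) : 'cV[R]_n :=
  match t with
  | 0 => 0
  | t'.+1 => F *m err_traj F w t' + w t'
  end.

(* Main.v *)
Require Import Defs.
From HB Require Import structures.
From mathcomp Require Import all_boot all_order all_algebra.
From mathcomp Require Import all_classical all_reals all_analysis.
From mathcomp Require Import ring lra measurable_realfun.
Import Order.TTheory GRing.Theory Num.Theory.
Import numFieldNormedType.Exports.
Local Open Scope classical_set_scope.
Local Open Scope ring_scope.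

Section Alg.
Context {R : realType}.

Definition bil {k l : nat} (M : 'M[R]_(k, l)) (x : 'cV[R]_k) (y : 'cV[R]_l) : R :=
  (x^T *m M *m y) 0 0.

Lemma qfE k (M : 'M[R]_k) x : qf M x = bil M x x. Proof. by []. Qed.

Lemma bilDl k l (M : 'M[R]_(k,l)) x1 x2 y : bil M (x1 + x2) y = bil M x1 y + bil M x2 y.
Proof. by rewrite /bil linearD /= !mulmxDl mxE. Qed.
Lemma bilDr k l (M : 'M[R]_(k,l)) x y1 y2 : bil M x (y1 + y2) = bil M x y1 + bil M x y2.
Proof. by rewrite /bil mulmxDr mxE. Qed.
Lemma bilZl k l (M : 'M[R]_(k,l)) a x y : bil M (a *: x) y = a * bil M x y.
Proof. by rewrite /bil linearZ /= -!scalemxAl mxE. Qed.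
Lemma bilZr k l (M : 'M[R]_(k,l)) a x y : bil M x (a *: y) = a * bil M x y.
Proof. by rewrite /bil -!scalemxAr mxE. Qed.
Lemma bilNl k l (M : 'M[R]_(k,l)) x y : bil M (- x) y = - bil M x y.
Proof. by rewrite -scaleN1r bilZl mulN1r. Qed.
Lemma bilNr k l (M : 'M[R]_(k,l)) x y : bil M x (- y) = - bil M x y.
Proof. by rewrite -scaleN1r bilZr mulN1r. Qed.
Lemma bil_tr k l (M : 'M[R]_(k,l)) x y : bil M x y = bil M^T y x.
Proof.
rewrite /bil; transitivity ((x^T *m M *m y)^T 0 0); first by rewrite [RHS]mxE.
by rewrite !trmx_mul trmxK mulmxA.
Qed.
Lemma bil_sym k (M : 'M[R]_k) x y : M^T = M -> bil M x y = bil M y x.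
Proof. by move=> sM; rewrite bil_tr sM. Qed.
Lemma bilMr k l p (M : 'M[R]_(k,l)) (N : 'M[R]_(l,p)) x y :
  bil M x (N *m y) = bil (M *m N) x y.
Proof. by rewrite /bil !mulmxA. Qed.
Lemma bilMl k l p (M : 'M[R]_(k,l)) (N : 'M[R]_(k,p)) x y :
  bil M (N *m x) y = bil (N^T *m M) x y.
Proof. by rewrite /bil trmx_mul !mulmxA. Qed.
Lemma bilDm k l (M N : 'M[R]_(k,l)) x y : bil (M + N) x y = bil M x y + bil N x y.
Proof. by rewrite /bil mulmxDr mulmxDl mxE. Qed.
Lemma bilZm k l (M : 'M[R]_(k,l)) a x y : bil (a *: M) x y = a * bil M x y.
Proof. by rewrite /bil -scalemxAr -scalemxAl mxE. Qed.
Lemma bilNm k l (M : 'M[R]_(k,l)) x y : bil (- M) x y = - bil M x y.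
Proof. by rewrite -scaleN1r bilZm mulN1r. Qed.
Lemma bil1 k l (M : 'M[R]_(k,l)) x y : bil M x y = bil 1%:M x (M *m y).
Proof. by rewrite bilMr mul1mx. Qed.
Lemma bil0l k l (M : 'M[R]_(k,l)) y : bil M 0 y = 0.
Proof. by rewrite /bil linear0 !mul0mx mxE. Qed.
Lemma bil0r k l (M : 'M[R]_(k,l)) x : bil M x 0 = 0.
Proof. by rewrite /bil mulmx0 mxE. Qed.

Lemma block_bil k l (A : 'M[R]_k) (B : 'M[R]_(k,l)) (C : 'M[R]_(l,k)) (D : 'M[R]_l) x y :
  qf (block_mx A B C D) (col_mx x y) = bil A x x + bil B x y + bil C y x + bil D y y.
Proof.
rewrite /qf /bil tr_col_mx mul_row_block mul_row_col !mulmxDl !mxE.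
by rewrite addrA; congr (_ + _); rewrite -addrA [X in _ + X]addrC addrA.
Qed.

Lemma trick k (M : 'M[R]_k) a b s : M^T = M -> (forall x, 0 <= qf M x) ->
  2 * s * bil M a b <= bil M a a + s ^+ 2 * bil M b b.
Proof.
move=> sM pM; have := pM (a - s *: b).
rewrite qfE !(bilDl, bilDr, bilNl, bilNr, bilZl, bilZr) (bil_sym _ M b a sM).
move=> h; rewrite -subr_ge0; apply: le_trans h _; rewrite le_eqVlt; apply/orP; left; apply/eqP.
ring.
Qed.

Lemma bil_sum k l (M : 'M[R]_(k,l)) x y :
  bil M x y = \sum_i \sum_j x i 0 * M i j * y j 0.
Proof.
rewrite /bil mxE (eq_bigr (fun j => \sum_i x i 0 * M i j * y j 0)); last first.
  by move=> j _; rewrite mxE mulr_suml; apply: eq_bigr => i _; rewrite mxE.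
by rewrite exchange_big.
Qed.

Lemma bil1_ge0 k (x : 'cV[R]_k) : 0 <= bil 1%:M x x.
Proof.
rewrite /bil mulmx1 mxE; apply: sumr_ge0 => i _; rewrite mxE -expr2; exact: sqr_ge0.
Qed.

Lemma bil1_gt0 k (x : 'cV[R]_k) : x != 0 -> 0 < bil 1%:M x x.
Proof.
move=> x0; rewrite lt_def bil1_ge0 andbT; apply: contra x0 => /eqP.
rewrite /bil mulmx1 mxE => /psumr_eq0P h.
have {}h : forall i : 'I_k, x^T 0 i * x i 0 = 0.
  by move=> i; apply: h => // i0 _; rewrite mxE -expr2 sqr_ge0.
apply/eqP/matrixP => i j.
rewrite (ord1 j) !mxE; have := h i; rewrite !mxE /= => /eqP.
by rewrite mulf_eq0 orbb => /eqP.
Qed.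

Arguments bil1_gt0 {k x}.
Arguments bil1_ge0 {k}.
Lemma cont_sum (T : topologicalType) (I : Type) (r : seq I) (g : I -> T -> R) :
  (forall i, continuous (g i)) -> continuous (fun v => \sum_(i <- r) g i v).
Proof.
move=> cg; elim: r => [|a r IH] v.
  under eq_fun do rewrite big_nil; exact: cst_continuous.
under eq_fun do rewrite big_cons.
exact: (continuousD (cg a v) (IH v)).
Qed.

Lemma cont_bil k (M : 'M[R]_k) :
  continuous (fun v : 'rV[R]_k => bil M v^T v^T).
Proof.
under eq_fun do rewrite bil_sum.
apply: cont_sum => i; apply: cont_sum => j.
under eq_fun do rewrite !mxE.
move=> v.
have h1 := @coord_continuous R 1 k 0 i.
have h2 := @coord_continuous R 1 k 0 j.
have h3 : continuous (fun _ : 'rV[R]_k => M i j) by move=> ?; exact: cst_continuous.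
exact: (continuousM (continuousM (h1 v) (h3 v)) (h2 v)).
Qed.

Lemma abs_le1 (a s : R) : 0 <= s -> a * a <= s -> s <= 1 -> `|a| <= 1.
Proof.
move=> s0 h s1; rewrite -(@ler_pXn2r _ 2) // ?nnegrE // expr1n real_normK ?num_real //.
by rewrite expr2; apply: le_trans h s1.
Qed.

Lemma pd_margin k (D : 'M[R]_k) : pd D ->
  exists2 mu : R, 0 < mu & forall x, mu * bil 1%:M x x <= qf D x.
Proof.
case=> sD pD.
pose S := [set v : 'rV[R]_k | bil 1%:M v^T v^T = 1].
pose f := fun v : 'rV[R]_k => bil D v^T v^T.
have scale x : x != 0 -> S ((Num.sqrt (bil 1%:M x x))^-1 *: x^T) /\
    f ((Num.sqrt (bil 1%:M x x))^-1 *: x^T) = (bil 1%:M x x)^-1 * qf D x.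
  move=> x0; have s0 := bil1_gt0 x0.
  rewrite /S /f /= linearZ /= trmxK !(bilZl, bilZr) !mulrA -expr2 exprVn.
  by rewrite sqr_sqrtr ?ltW // mulVf ?gt_eqF //.
have qf0 : qf D 0 = 0 by rewrite qfE bil0l.
case: (pselect (S !=set0)) => [Sn0|S0]; last first.
  exists 1 => // x; case: (eqVneq x 0) => [->|x0]; first by rewrite qf0 bil0l mulr0.
  by exfalso; apply: S0; eexists; exact: (scale x x0).1.
have cS : compact S.
  apply: bounded_closed_compact.
    exists 1; split => [|M M1 v Sv]; first exact: num_real.
    rewrite /= [leLHS]/Num.norm /= mx_normrE; apply: bigmax_le => [|ij _].
      by apply: le_trans (ltW M1).
    apply: le_trans (ltW M1); case: ij => a b /=; rewrite (ord1 a).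
    apply: (@abs_le1 _ (bil 1%:M v^T v^T)); [exact: bil1_ge0| |by rewrite Sv].
    rewrite /bil mulmx1 mxE (bigD1 b) //= !mxE lerDl.
    by apply: sumr_ge0 => i _; rewrite !mxE -expr2 sqr_ge0.
  have h := (continuous_closedP _).1 (@cont_bil k 1%:M) _ (@closed_eq R 1).
  exact: h.
have [c Sc cmin] := compact_EVT_min Sn0 cS (continuous_subspaceT (@cont_bil k D)).
rewrite inE in Sc.
exists (f c).
  apply: pD; apply/eqP => c0; move: Sc; rewrite /S /= c0 bil0l => /eqP.
  by rewrite eq_sym oner_eq0.
move=> x; case: (eqVneq x 0) => [->|x0]; first by rewrite qf0 bil0l mulr0.
have [Sv fv] := scale x x0; have := cmin _ (mem_set Sv).
rewrite -/(f c) -/(f _) fv => h; have s0 := bil1_gt0 x0.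
by have := ler_wpM2r (ltW s0) h; rewrite mulrAC mulVf ?gt_eqF // mul1r.
Qed.

Lemma pd_ge0 k (M : 'M[R]_k) : pd M -> forall x, 0 <= qf M x.
Proof.
case=> _ pM x; case: (eqVneq x 0) => [->|x0]; first by rewrite qfE bil0l.
exact/ltW/pM.
Qed.

Lemma pd_unit k (M : 'M[R]_k) : pd M -> M \in unitmx.
Proof.
case=> sM pM; rewrite unitmxE unitfE; apply/negP => /det0P [v v0 vM].
have : v^T != 0 by apply: contra v0 => /eqP h; rewrite -[v]trmxK h linear0.
move=> /pM; rewrite /qf trmxK vM !mul0mx mxE ltxx //.
Qed.

Arguments pd_unit {k M}.
Arguments pd_ge0 {k M}.
Lemma inv_sym k (M : 'M[R]_k) : M^T = M -> (invmx M)^T = invmx M.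
Proof. by move=> sM; rewrite trmx_inv sM. Qed.

Arguments inv_sym {k M}.
Lemma pd_inv k (M : 'M[R]_k) : pd M -> pd (invmx M).
Proof.
move=> hM; have uM := pd_unit hM; case: hM => sM pM; split; first exact: inv_sym.
move=> x x0; have : invmx M *m x != 0.
  by apply: contra x0 => /eqP h; rewrite -(mulKVmx uM x) h mulmx0.
by move=> /pM; rewrite !qfE bilMl bilMr (inv_sym sM) mulVmx // mul1mx.
Qed.

Arguments pd_inv {k M}.
Arguments trick {k M}.
Lemma invariance n m (A : 'M[R]_n) (B : 'M[R]_(n,m)) (Y H : 'M[R]_n) (Psi : 'M[R]_(m,n))
  (lam0 lam1 : R) e w :
  pd Y -> pd H -> 0 <= lam0 -> 0 < lam1 -> 0 <= 1 - lam0 - lam1 ->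
  psd (block_mx (H - lam1^-1 *: invmx Y) (A *m H + B *m Psi)
                ((A *m H + B *m Psi)^T) (lam0 *: H)) ->
  qf (invmx H) e <= 1 -> qf Y w <= 1 ->
  qf (invmx H) ((A + B *m (Psi *m invmx H)) *m e + w) <= 1.
Proof.
move=> pY pH l0 l1 l01 [_ pB] he hw.
have uH := pd_unit pH; have uY := pd_unit pY.
have sH := pH.1; have sY := pY.1.
have sPhi := inv_sym sH; have sYi := inv_sym sY.
set Phi := invmx H in he sPhi *; set F := A + B *m (Psi *m Phi).
set z := F *m e + w; set u := Phi *m z.
set S := qf Phi z.
set a := bil 1%:M u (F *m e); set b := bil 1%:M u w.
have Sab : S = a + b.
  by rewrite /S qfE /a /b -bilDr -/z bilMl mulmx1 sPhi.
have GPhi : (A *m H + B *m Psi) *m Phi = F.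
  by rewrite mulmxDl -mulmxA mulmxV // mulmx1 -mulmxA.
pose y := - S *: (Phi *m e).
have := pB (col_mx u y); rewrite block_bil -bil_tr.
rewrite bilDm bilNm !bilZm.
have -> : bil H u u = S.
  by rewrite /u bilMl bilMr sPhi mulVmx // mul1mx.
have -> : bil (A *m H + B *m Psi) u y = - S * a.
  by rewrite /y bilZr bilMr GPhi /a bilMr mul1mx.
have -> : bil H y y = S ^+ 2 * qf Phi e.
  rewrite /y bilZl bilZr bilMl bilMr sPhi mulVmx // mul1mx.
  by rewrite mulrA -expr2 sqrrN.
set Q := bil (invmx Y) u u.
have hQ : 2 * (lam1 * S) * b <= Q + (lam1 * S) ^+ 2 * qf Y w.
  have := trick (invmx Y *m u) w (lam1 * S) sY (pd_ge0 pY).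
  have e1 : bil Y (invmx Y *m u) (invmx Y *m u) = Q.
    by rewrite bilMl bilMr sYi mulVmx // mul1mx.
  have e2 : bil Y (invmx Y *m u) w = b by rewrite bilMl sYi mulVmx.
  by rewrite e1 e2.
have hQ' : 2 * S * b - lam1 * S ^+ 2 <= lam1^-1 * Q.
  rewrite -(ler_pM2l l1) mulVKf ?gt_eqF //.
  have : (lam1 * S) ^+ 2 * qf Y w <= (lam1 * S) ^+ 2 by rewrite ler_piMr ?sqr_ge0.
  move: hQ; set q := qf Y w; set ls := lam1 * S => hQ hq.
  rewrite /ls in hQ hq; nra.
have hE : lam0 * (S ^+ 2 * qf Phi e) <= lam0 * S ^+ 2.
  by rewrite ler_wpM2l // ler_piMr ?sqr_ge0.
move=> h.
have hS : S ^+ 2 <= S by nra.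
case: (lerP S 1) => // S1; nra.
Qed.

Lemma entry_le_norm k (v : 'cV[R]_k) i : `|v i 0| <= `|v|.
Proof.
rewrite [leRHS]/Num.norm /= mx_normrE.
exact: (le_bigmax 0 (fun ij : 'I_k * 'I_1 => `|v ij.1 ij.2|) (i, 0)).
Qed.

Lemma qf_bound k (M : 'M[R]_k) (x : 'cV[R]_k) (rho : R) : (forall i, `|x i 0| <= rho) ->
  qf M x <= (\sum_i \sum_j `|M i j|) * rho ^+ 2.
Proof.
move=> hx; rewrite qfE bil_sum mulr_suml; apply: ler_sum => i _.
rewrite mulr_suml; apply: ler_sum => j _.
apply: le_trans (ler_norm _) _; rewrite !normrM.
have h1 := hx i; have h2 := hx j.
have h3 := normr_ge0 (x i 0); have h4 := normr_ge0 (x j 0); have h5 := normr_ge0 (M i j).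
have h6 : `|x i 0| * `|x j 0| <= rho * rho by apply: ler_pM.
have := ler_wpM2l h5 h6.
by rewrite expr2 mulrAC mulrC.
Qed.

Lemma interior_ell k (M : 'M[R]_k) c (S2 : set 'cV[R]_k) eta :
  M^T = M -> (forall x, 0 <= qf M x) -> 0 < eta ->
  (forall a, S2 a -> qf M a <= 1 - eta) ->
  interior (pdiff (ellipsoid M c) S2) !=set0.
Proof.
move=> sM pM eta0 hS; exists c; rewrite /interior; apply/nbhs_ballP.
set C := \sum_i \sum_j `|M i j|.
have C0 : 0 <= C by apply: sumr_ge0 => i _; apply: sumr_ge0 => j _.
have X0 : 0 < (1 + eta) * (C + 1).
  by apply: mulr_gt0; [lra|lra].
set r := Num.min 1 (eta ^+ 3 / ((1 + eta) * (C + 1))).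
have r0 : 0 < r.
  by rewrite lt_min ltr01 /= divr_gt0 // exprn_gt0.
have r1 : r <= 1 by rewrite ge_min lexx.
have r2 : r * ((1 + eta) * (C + 1)) <= eta ^+ 3.
  by rewrite -ler_pdivlMr // ge_min lexx orbT.
exists r => // y; rewrite -ball_normE /= => hy a Sa.
rewrite /ellipsoid /= addrAC.
set d := y - c.
have hd : forall i, `|d i 0| <= r.
  move=> i; apply: le_trans (entry_le_norm _ d i) _.
  by rewrite /d distrC ltW.
clearbody d.
have qd := qf_bound _ M _ _ hd.
have ha := hS a Sa.
have tr := trick d a eta sM pM.
rewrite qfE bilDl !bilDr (bil_sym _ _ a d sM) -!qfE.
rewrite -!qfE in tr.
have qd0 := pM d; have qa0 := pM a.
have e3 : (1 + eta) * (C * r ^+ 2) <= eta ^+ 3.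
  apply: le_trans r2.
  have h : C * r ^+ 2 <= r * (C + 1).
    rewrite expr2; apply: le_trans (ler_wpM2l C0 (ler_wpM2l (ltW r0) r1)) _.
    rewrite mulr1; nra.
  apply: le_trans (ler_wpM2l _ h) _; first lra.
  by rewrite mulrCA.
set qa := qf M a in ha tr qa0 *; set qdd := qf M d in qd tr qd0 *.
set b := bil M d a in tr *.
rewrite -/C in qd.
have f1 : (1 + eta) * qdd <= (1 + eta) * (C * r ^+ 2) by apply: ler_wpM2l => //; lra.
have f2 : (eta * (1 + eta)) * qa <= (eta * (1 + eta)) * (1 - eta).
  by apply: ler_wpM2l => //; apply: mulr_ge0; lra.
have : eta * (qdd + b + (b + qa)) <= eta.
  have -> : eta * (qdd + b + (b + qa)) = eta * qdd + 2 * eta * b + eta * qa by ring.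
  have e33 : eta ^+ 3 = eta * eta * eta by rewrite !exprS expr0 mulr1 mulrA.
  rewrite e33 in e3.
  rewrite expr2 in tr. lra.
rewrite -[leRHS]mulr1 ler_pM2l //.
Qed.

Arguments pd_margin {k D}.
Lemma bil0m k l (x : 'cV[R]_k) (y : 'cV[R]_l) : bil 0 x y = 0.
Proof. by rewrite /bil mulmx0 mul0mx mxE. Qed.

Lemma frac_bound (S kap : R) : 0 < kap -> S * (1 + kap) <= 1 -> S <= 1 - kap / (1 + kap).
Proof.
move=> k0 h; have k1 : 0 < 1 + kap by lra.
have -> : 1 - kap / (1 + kap) = 1 / (1 + kap) by field; rewrite gt_eqF.
by rewrite ler_pdivlMr.
Qed.

Lemma sq_bound (S kap : R) : 0 < kap -> S ^+ 2 * (1 + kap) <= S -> S * (1 + kap) <= 1.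
Proof.
move=> k0 h; case: (lerP S 0) => S0; first nra.
rewrite expr2 -mulrA in h.
by rewrite -(ler_pM2l S0) mulr1.
Qed.

Lemma trick1 k (a b : 'cV[R]_k) s :
  2 * s * bil 1%:M a b <= bil 1%:M a a + s ^+ 2 * bil 1%:M b b.
Proof. by apply: trick; [exact: trmx1 | move=> x; exact: bil1_ge0]. Qed.
Arguments trick1 {k}.

Lemma bound_X n (P H : 'M[R]_n) : pd P -> pd H -> pd (invmx P - H) ->
  exists2 eta, 0 < eta & forall e, qf (invmx H) e <= 1 -> qf P e <= 1 - eta.
Proof.
move=> pP pH pD.
have [mu mu0 hmu] := pd_margin pD.
have [mu' mu'0 hmu'] := pd_margin (pd_inv pH).
have k0 : 0 < mu * mu' by apply: mulr_gt0.
exists ((mu * mu') / (1 + mu * mu')); first by apply: divr_gt0 => //; lra.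
move=> e he; apply: frac_bound => //; apply: sq_bound => //.
have uH := pd_unit pH; have uP := pd_unit pP.
have sH := pH.1; have sP := pP.1; have sPhi := inv_sym sH.
set Phi := invmx H in he sPhi hmu' *.
set S := qf P e; set g := P *m e; set v := Phi *m e.
have ha : S = bil 1%:M g e by rewrite /g bilMl mulmx1 sP.
have hb : bil (invmx P) g g = S.
  by rewrite /g bilMl bilMr sP mulmxV // mul1mx.
have hc : bil (invmx P - H) g g = S - bil H g g by rewrite bilDm bilNm hb.
have hd := trick g v S sH (pd_ge0 pH).
have e1 : bil H g v = S by rewrite /v bilMr mulmxV // ha bilMr mul1mx.
have e2 : bil H v v = qf Phi e by rewrite /v bilMl bilMr sPhi mulVmx // mul1mx.
rewrite e1 e2 in hd.
have he' := hmu g; rewrite qfE hc in he'.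
have hf := trick1 g e (mu' * S); rewrite -ha in hf.
have hg := hmu' e.
set G := bil 1%:M g g in hd he' hf; set E1 := bil 1%:M e e in hf hg.
set Hg := bil H g g in hd he'.
have hPh : S ^+ 2 * qf Phi e <= S ^+ 2 by rewrite ler_piMr ?sqr_ge0.
have h1 : S ^+ 2 <= Hg by rewrite expr2 in hPh *; lra.
have h2 : (mu' * S) ^+ 2 * E1 <= mu' * S ^+ 2.
  have : mu' * E1 <= 1 by apply: le_trans hg he.
  move=> h; have := ler_wpM2l (mulr_ge0 (ltW mu'0) (sqr_ge0 S)) h.
  rewrite mulr1 => h'; apply: le_trans h'; rewrite le_eqVlt; apply/orP; left.
  by apply/eqP; ring.
have h3 : mu' * S ^+ 2 <= G.
  rewrite expr2 in h2 hf *; lra.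
have h4 := ler_wpM2l (ltW mu0) h3.
rewrite expr2 in h1 h4 *; lra.
Qed.

Lemma bound_U n m (H : 'M[R]_n) (Psi : 'M[R]_(m,n)) (Q Qh : 'M[R]_m) :
  pd H -> Qh^T = Qh -> Qh *m Qh = Q ->
  pd (block_mx H (Psi^T *m Qh) (Qh *m Psi) 1%:M) ->
  exists2 eta, 0 < eta & forall e, qf (invmx H) e <= 1 ->
    qf Q (Psi *m invmx H *m e) <= 1 - eta.
Proof.
move=> pH sQh hQ pBg.
have [mu mu0 hmu] := pd_margin pBg.
exists (mu / (1 + mu)); first by apply: divr_gt0 => //; lra.
move=> e he; apply: frac_bound => //.
have uH := pd_unit pH; have sH := pH.1; have sPhi := inv_sym sH.
set Phi := invmx H in he sPhi *.
set v := Phi *m e; set z := Qh *m (Psi *m v).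
have -> : qf Q (Psi *m Phi *m e) = bil 1%:M z z.
  by rewrite -mulmxA -/v qfE /z [RHS]bilMl [RHS]bilMr mulmx1 sQh hQ.
set Sq := bil 1%:M z z.
have := hmu (col_mx v (- z)).
rewrite (scalar_mx_block n m (1 : R)) -qfE !block_bil !bil0m !addr0.
have e1 : bil H v v = qf Phi e by rewrite /v bilMl bilMr sPhi mulVmx // mul1mx.
have e2 : bil (Psi^T *m Qh) v (- z) = - Sq.
  by rewrite bilNr bil_tr trmx_mul trmxK sQh bil1 /z -mulmxA.
have e3 : bil (Qh *m Psi) (- z) v = - Sq.
  by rewrite bilNl bil1 /z -mulmxA.
rewrite e1 e2 e3 bilNl bilNr opprK -/Sq.
have := bil1_ge0 v; set Vv := bil 1%:M v v => hv h.
have hS := bil1_ge0 z; rewrite -/Sq in hS.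
nra.
Qed.

End Alg.
Arguments invariance {R n m A B Y H Psi lam0 lam1 e w}.
Arguments bound_X {R n P H}.
Arguments bound_U {R n m H Psi Q Qh}.
Arguments interior_ell {R k M c S2 eta}.
Arguments pd_ge0 {R k M}.

Section Meas.
Context {R : realType} {d : measure_display} {T : measurableType d}.

Lemma mfun_sum (I : Type) (r : seq I) (g : I -> T -> R) :
  (forall i, measurable_fun setT (g i)) ->
  measurable_fun setT (fun o => \sum_(i <- r) g i o).
Proof.
move=> mg; elim: r => [|a r IH].
  under eq_fun do rewrite big_nil; exact: measurable_cst.
under eq_fun do rewrite big_cons; exact: measurable_funD.
Qed.

Lemma meas_qf k (M : 'M[R]_k) (g : T -> 'cV[R]_k) :
  (forall i, measurable_fun setT (fun o => g o i 0)) ->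
  measurable [set o | qf M (g o) <= 1].
Proof.
move=> hg.
have mf : measurable_fun setT (fun o => qf M (g o)).
  under eq_fun do rewrite qfE bil_sum.
  apply: mfun_sum => i; apply: mfun_sum => j.
  apply: measurable_funM; last exact: hg.
  apply: measurable_funM; first exact: hg.
  exact: measurable_cst.
have := mf measurableT `]-oo, 1]%classic (measurable_itv _).
rewrite setTI; congr measurable; apply/seteqP; split => o /=;
  by rewrite in_itv /=.
Qed.

Lemma meas_traj n N (F : 'M[R]_n) (w : nat -> T -> 'cV[R]_n) :
  (forall t, (t < N)%N -> forall i : 'I_n, measurable_fun setT (fun o => w t o i 0)) ->
  forall t, (t <= N)%N -> forall i,
    measurable_fun setT (fun o => err_traj F (w ^~ o) t i 0).
Proof.
move=> hw; elim => [|t IH] tN i /=.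
  under eq_fun do rewrite mxE; exact: measurable_cst.
under eq_fun do rewrite !mxE.
apply: measurable_funD; last exact: hw.
apply: mfun_sum => j; apply: measurable_funM; first exact: measurable_cst.
exact: IH (ltnW tN) j.
Qed.

End Meas.
Theorem theorem2 (R : realType) (n m N : nat) (theta : R)
  (A : 'M[R]_n) (B : 'M[R]_(n, m))
  (p : nat -> 'cV[R]_n) (P : nat -> 'M[R]_n) (Q : 'M[R]_m) (Qh : 'M[R]_m)
  (Y : 'M[R]_n)
  (d : measure_display) (T : measurableType d) (Pr : probability T R)
  (w : nat -> T -> 'cV[R]_n)
  (Phihat : 'M[R]_n) (Psi : 'M[R]_(m, n)) (lam0 lam1 : R) :
  (1 <= N)%N ->
  0 < theta < 1 ->
  (forall t, (1 <= t <= N)%N -> pd (P t)) ->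
  pd Q ->
  (* Qh = Q^{1/2}, the symmetric positive definite square root of Q *)
  pd Qh -> Qh *m Qh = Q ->
  pd Y ->
  (* the disturbances w(0), ..., w(N-1) are random vectors *)
  (forall t, (t < N)%N -> forall i : 'I_n,
      measurable_fun setT (fun o => w t o i 0)) ->
  (Pr [set o | forall t, (t < N)%N -> ellipsoid Y 0 (w t o)] >= (1 - theta)%:E)%E ->
  (* feasibility of (Phihat, Psi, lam0, lam1) *)
  pd Phihat ->
  0 <= lam0 -> 0 <= lam1 -> 0 < lam1 -> 0 <= 1 - lam0 - lam1 ->
  psd (block_mx (Phihat - lam1^-1 *: invmx Y) (A *m Phihat + B *m Psi)
                ((A *m Phihat + B *m Psi)^T) (lam0 *: Phihat)) ->
  pd (block_mx Phihat (Psi^T *m Qh) (Qh *m Psi) 1%:M) ->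
  (forall t, (1 <= t <= N)%N -> pd (invmx (P t) - Phihat)) ->
  let Phi := invmx Phihat in
  let K := Psi *m Phi in
  let E := ellipsoid Phi 0 in
  let Eu := [set K *m e | e in E] in
  let U := ellipsoid Q 0 in
  let X := fun t => ellipsoid (P t) (p t) in
  let e0 := fun o => err_traj (A + B *m K) (w ^~ o) in
  [/\ (Pr [set o | forall t, (1 <= t <= N)%N -> E (e0 o t)] >= (1 - theta)%:E)%E,
      (forall t, (1 <= t <= N)%N -> interior (pdiff (X t) E) !=set0) &
      interior (pdiff U Eu) !=set0].
Proof.
move=> N1 th hP pQ pQh hQQ pY hw hW pH l0 l1' l1 l01 pB pBg hPD.
move=> Phi K E Eu U X e0.
split.
- set Wset := [set o | forall t, (t < N)%N -> ellipsoid Y 0 (w t o)] in hW *.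
  set Eset := [set o | forall t, (1 <= t <= N)%N -> E (e0 o t)].
  have sub : Wset `<=` Eset.
    move=> o Wo.
    suff hall : forall t, (t <= N)%N -> E (e0 o t).
      by move=> t /andP[_ tN]; exact: hall.
    elim => [|t IH] tN.
      by rewrite /E /ellipsoid /= subr0 qfE bil0l ler01.
    have := IH (ltnW tN); rewrite /E /ellipsoid /= !subr0 => he.
    have := Wo t tN; rewrite /ellipsoid /= subr0 => hwt.
    rewrite /e0 /=; exact: (invariance pY pH l0 l1 l01 pB he hwt).
  have mW : measurable Wset.
    rewrite (_ : Wset = \bigcap_t [set o | (t < N)%N -> ellipsoid Y 0 (w t o)]); last first.
      by apply/seteqP; split => o /= h t; [move=> _|]; exact: h.
    apply: bigcapT_measurable => t.
    case: (ltnP t N) => tN.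
      rewrite (_ : [set o | _] = [set o | qf Y (w t o - 0) <= 1]); last first.
        by apply/seteqP; split => o /= h; [exact: h|move=> _; exact: h].
      apply: meas_qf => i; under eq_fun do rewrite subr0; exact: hw.
    rewrite (_ : [set o | _] = setT); first exact: measurableT.
    by apply/seteqP; split => o //= _; rewrite ltnNge tN.
  have mE : measurable Eset.
    rewrite (_ : Eset = \bigcap_t [set o | (1 <= t <= N)%N -> E (e0 o t)]); last first.
      by apply/seteqP; split => o /= h t; [move=> _|]; exact: h.
    apply: bigcapT_measurable => t.
    case tN: (1 <= t <= N)%N.
      rewrite (_ : [set o | _] = [set o | qf Phi (e0 o t - 0) <= 1]); last first.
        by apply/seteqP; split => o /= h; [exact: h|move=> _; exact: h].
      apply: meas_qf => i; under eq_fun do rewrite subr0.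
      case/andP: tN => _ tN.
      exact: (@meas_traj R d T n N (A + B *m K) w hw t tN i).
    rewrite (_ : [set o | _] = setT); first exact: measurableT.
    by apply/seteqP; split => o //= _.
  apply: le_trans hW _.
  exact: (le_measure Pr (mem_set mW) (mem_set mE) sub).
- move=> t ht.
  have [eta eta0 heta] := bound_X (hP t ht) pH (hPD t ht).
  apply: (interior_ell (hP t ht).1 (pd_ge0 (hP t ht)) eta0).
  by move=> a; rewrite /E /ellipsoid /= subr0 => Ea; exact: heta.
- have [eta eta0 heta] := bound_U pH pQh.1 hQQ pBg.
  apply: (interior_ell pQ.1 (pd_ge0 pQ) eta0).
  move=> a [e Ee <-]; apply: heta; move: Ee; rewrite /E /ellipsoid /= subr0.
  by [].
Qed.
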